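(* Let $E\subset\mathbb{Q}_p$ be a $p$-homogeneous discrete set. Then there exists an isometry $f:\mathbb{Q}_p\to\mathbb{Q}_p$ (with respect to $|\cdot|_p$) such that $$f(E)=\widehat E:=\Big\{\sum_{i\in I_E}\beta_ip^i:\ \beta_i\in\{0,1,\dots,p-1\},\ \text{only finitely many }\beta_i\neq0\Big\}.$$
   Context: $p\ge2$ is a prime, $v_p$ is the $p$-adic valuation and $|x|_p=p^{-v_p(x)}$. Balls are $B(a,p^{-n})=a+p^n\mathbb{Z}_p$. Admissible $p$-orders: $I_E=\{v_p(x-y):x,y\in E,\ x\ne y\}$ and $I_E^{\ge n}=\{i\in I_E:i\ge n\}$. $p$-homogeneous discrete set: $E$ with $I_E$ bounded above is $p$-homogeneous if $\sharp(E\cap B(a,p^{-n}))\in\{0,\ p^{\sharp I_E^{\ge n}}\}$ for all $n\in\mathbb{Z}$ and all $a\in\mathbb{Q}_p$. *)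

(* Defs.v *)
From Stdlib Require Import ZArith Arith Lia List Classical ClassicalEpsilon Reals Znumtheory.

(* The field Q_p, modelled by its canonical p-adic digit expansions: *)
(*   x = sum_{i in Z} dig x i * p^i,  0 <= dig x i < p,              *)
Record Qp (p : nat) : Type := mkQp {
  dig : Z -> nat;
  dig_lt : forall i, (dig i < p)%nat;
  dig_low : exists N, forall i, (i < N)%Z -> dig i = 0%nat }.
Arguments mkQp {p}.
Arguments dig {p}.
Arguments dig_lt {p}.
Arguments dig_low {p}.

(* position i is 1 iff  sum_{j<i} x_j p^j  <  sum_{j<i} y_j p^j.       *)
Definition borrow {p : nat} (x y : Qp p) (i : Z) : nat :=
  if excluded_middle_informative
       (exists j, (j < i)%Z /\ (dig x j < dig y j)%nat /\
                  forall k, (j < k < i)%Z -> dig x k = dig y k)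
  then 1%nat else 0%nat.

Definition sub_dig {p : nat} (x y : Qp p) (i : Z) : nat :=
  ((dig x i + p - dig y i - borrow x y i) mod p)%nat.

Lemma sub_dig_lt {p : nat} (x y : Qp p) i : (sub_dig x y i < p)%nat.
Proof.
  unfold sub_dig. apply Nat.mod_upper_bound. pose proof (dig_lt x 0%Z). lia.
Qed.

Lemma sub_dig_low {p : nat} (x y : Qp p) :
  exists N, forall i, (i < N)%Z -> sub_dig x y i = 0%nat.
Proof.
  destruct (dig_low x) as [Nx Hx]; destruct (dig_low y) as [Ny Hy].
  exists (Z.min Nx Ny). intros i Hi. unfold sub_dig, borrow.
  rewrite (Hx i) by lia. rewrite (Hy i) by lia.
  destruct (excluded_middle_informative _) as [[j [Hj [Hlt _]]]|_].
  - rewrite (Hx j), (Hy j) in Hlt by lia. lia.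
  - replace (0 + p - 0 - 0)%nat with p by lia. apply Nat.Div0.mod_same.
Qed.

Definition Qpsub {p : nat} (x y : Qp p) : Qp p :=
  mkQp (sub_dig x y) (sub_dig_lt x y) (sub_dig_low x y).

Definition is_val {p : nat} (x : Qp p) (v : Z) : Prop :=
  dig x v <> 0%nat /\ forall i, (i < v)%Z -> dig x i = 0%nat.

Definition absp {p : nat} (x : Qp p) : R :=
  if excluded_middle_informative (exists v, is_val x v)
  then powerRZ (INR p) (- epsilon (inhabits 0%Z) (is_val x))
  else 0%R.

Definition ball {p : nat} (a : Qp p) (n : Z) (x : Qp p) : Prop :=
  (absp (Qpsub x a) <= powerRZ (INR p) (- n))%R.

Definition adm_orders {p : nat} (E : Qp p -> Prop) (i : Z) : Prop :=
  exists x y, E x /\ E y /\ x <> y /\ is_val (Qpsub x y) i.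

Definition card_is {T : Type} (A : T -> Prop) (k : nat) : Prop :=
  exists l : list T, NoDup l /\ length l = k /\ forall x, In x l <-> A x.

Definition p_homogeneous {p : nat} (E : Qp p -> Prop) : Prop :=
  forall (n : Z) (a : Qp p),
    card_is (fun x => E x /\ ball a n x) 0%nat \/
    exists k, card_is (fun i => adm_orders E i /\ (n <= i)%Z) k /\
              card_is (fun x => E x /\ ball a n x) (p ^ k)%nat.

Definition isometry {p : nat} (f : Qp p -> Qp p) : Prop :=
  forall x y, absp (Qpsub (f x) (f y)) = absp (Qpsub x y).

(* E-hat = { sum_{i in I_E} beta_i p^i : beta_i in {0..p-1}, finitely many
   nonzero }; in the digit model this is the set of elements whose digits
   vanish outside I_E and are nonzero only finitely often. *)
Definition hatE {p : nat} (E : Qp p -> Prop) (x : Qp p) : Prop :=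
  (forall i, dig x i <> 0%nat -> adm_orders E i) /\
  exists M, forall i, (M < i)%Z -> dig x i = 0%nat.

(* Main.v *)
Require Import Defs.
From Stdlib Require Import ZArith Arith List Classical ClassicalEpsilon Reals Znumtheory Lia Lra ProofIrrelevance FunctionalExtensionality.

Section S.
Context {p : nat} (Hp : (2 <= p)%nat).

Definition first_diff (x y : Qp p) (v : Z) : Prop :=
  dig x v <> dig y v /\ forall i, (i < v)%Z -> dig x i = dig y i.

Lemma borrow0 (x y : Qp p) i : (forall j, (j < i)%Z -> dig x j = dig y j) -> borrow x y i = 0%nat.
Proof.
  intros H. unfold borrow. destruct (excluded_middle_informative _) as [[j [Hj [Hl _]]]|]; auto.
  rewrite (H j Hj) in Hl. lia.
Qed.

Lemma modp_eq0 a b : (a < p)%nat -> (b < p)%nat -> ((a + p - b - 0) mod p = 0 <-> a = b)%nat.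
Proof.
  intros Ha Hb. split; intros H.
  - destruct (Nat.lt_trichotomy a b) as [Hab|[Hab|Hab]]; auto.
    + rewrite Nat.mod_small in H by lia. lia.
    + replace (a + p - b - 0)%nat with ((a - b) + 1 * p)%nat in H by lia.
      rewrite Nat.Div0.mod_add, Nat.mod_small in H by lia. lia.
  - subst. replace (b + p - b - 0)%nat with (0 + 1 * p)%nat by lia.
    rewrite Nat.Div0.mod_add. apply Nat.Div0.mod_0_l.
Qed.

Lemma least_Z (P : Z -> Prop) N j : (forall i, P i -> (N <= i)%Z) -> P j ->
  exists w, P w /\ forall i, (i < w)%Z -> ~ P i.
Proof.
  intros HN. remember (Z.to_nat (j - N)) as k eqn:Hk.
  assert (Hk' : (Z.to_nat (j - N) <= k)%nat) by lia. clear Hk. revert j Hk'.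
  induction k as [|k IH]; intros j Hk Pj.
  - exists j. split; auto. intros i Hi Pi. pose proof (HN i Pi). pose proof (HN j Pj). lia.
  - destruct (classic (exists i, (i < j)%Z /\ P i)) as [[i [Hi Pi]]|Hno].
    + apply (IH i); auto. pose proof (HN i Pi). lia.
    + exists j. split; auto. intros i Hi Pi. apply Hno; eauto.
Qed.

Lemma diff_cases (x y : Qp p) : (forall i, dig x i = dig y i) \/ exists w, first_diff x y w.
Proof.
  destruct (classic (exists i, dig x i <> dig y i)) as [[i Hi]|Hno].
  - right. destruct (dig_low x) as [Nx Hx]. destruct (dig_low y) as [Ny Hy].
    destruct (least_Z (fun i => dig x i <> dig y i) (Z.min Nx Ny) i) as [w [Hw1 Hw2]]; auto.
    + intros k Hk. destruct (Z_lt_le_dec k (Z.min Nx Ny)); auto.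
      rewrite Hx, Hy in Hk by lia. congruence.
    + exists w. split; auto. intros k Hk. apply NNPP. apply Hw2; auto.
  - left. intros i. apply NNPP. intros H. apply Hno. eauto.
Qed.

Lemma is_val_sub (x y : Qp p) v : is_val (Qpsub x y) v <-> first_diff x y v.
Proof.
  assert (Hfd : forall w, first_diff x y w -> is_val (Qpsub x y) w).
  { intros w [H1 H2]. split; simpl; unfold sub_dig.
    - rewrite borrow0 by auto. rewrite modp_eq0 by apply dig_lt. auto.
    - intros i Hi. rewrite borrow0 by (intros; apply H2; lia).
      apply modp_eq0; try apply dig_lt. apply H2; auto. }
  split; auto. intros Hv.
  destruct (diff_cases x y) as [Hall|[w Hw]].
  - exfalso. destruct Hv as [Hv _]. apply Hv. simpl. unfold sub_dig.
    rewrite borrow0 by auto. apply modp_eq0; try apply dig_lt. auto.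
  - pose proof (Hfd w Hw) as Hw'. destruct Hv as [Hv1 Hv2]. destruct Hw' as [Hw1 Hw2].
    destruct (Z.lt_trichotomy v w) as [H|[H|H]].
    + exfalso. apply Hv1. apply Hw2. auto.
    + subst. auto.
    + exfalso. apply Hw1. apply Hv2. auto.
Qed.

Lemma is_val_uniq (z : Qp p) v w : is_val z v -> is_val z w -> v = w.
Proof.
  intros [Hv1 Hv2] [Hw1 Hw2]. destruct (Z.lt_trichotomy v w) as [H|[H|H]]; auto.
  - exfalso; apply Hv1; auto.
  - exfalso; apply Hw1; auto.
Qed.

Lemma absp_val (z : Qp p) v : is_val z v -> absp z = powerRZ (INR p) (- v).
Proof.
  intros Hv. unfold absp. destruct (excluded_middle_informative _) as [He|He].
  - pose proof (epsilon_spec (inhabits 0%Z) (is_val z) He) as Hs.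
    rewrite (is_val_uniq z _ v Hs Hv). reflexivity.
  - exfalso; eauto.
Qed.

Lemma absp_noval (z : Qp p) : (forall v, ~ is_val z v) -> absp z = 0%R.
Proof.
  intros H. unfold absp. destruct (excluded_middle_informative _) as [[v Hv]|]; auto.
  exfalso; eapply H; eauto.
Qed.

Lemma absp_ext (a b : Qp p) : (forall v, is_val a v <-> is_val b v) -> absp a = absp b.
Proof.
  intros H. destruct (classic (exists v, is_val a v)) as [[v Hv]|Hno].
  - rewrite (absp_val a v), (absp_val b v); auto. apply H; auto.
  - rewrite !absp_noval; auto; intros v Hv; apply Hno; exists v; auto. apply H; auto.
Qed.

Lemma pow_le_iff (n w : Z) : (powerRZ (INR p) (- w) <= powerRZ (INR p) (- n))%R <-> (n <= w)%Z.
Proof.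
  assert (H1 : (1 < INR p)%R). { replace 1%R with (INR 1) by reflexivity. apply lt_INR. lia. }
  rewrite !powerRZ_Rpower by lra. split; intros H.
  - destruct (Z_le_gt_dec n w); auto. exfalso.
    assert (Rpower (INR p) (IZR (- n)) < Rpower (INR p) (IZR (- w)))%R.
    { apply Rpower_lt; auto. apply IZR_lt. lia. } lra.
  - apply Rle_Rpower; try lra. apply IZR_le. lia.
Qed.

Lemma ball_iff (a : Qp p) n x : ball a n x <-> forall i, (i < n)%Z -> dig x i = dig a i.
Proof.
  unfold ball. destruct (diff_cases x a) as [Hall|[w Hw]].
  - rewrite absp_noval.
    + split; auto. intros _. apply powerRZ_le. replace 0%R with (INR 0) by reflexivity. apply lt_INR. lia.
    + intros v Hv. apply is_val_sub in Hv. destruct Hv as [Hv _]. auto.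
  - rewrite (absp_val _ w) by (apply is_val_sub; auto). rewrite pow_le_iff.
    destruct Hw as [Hw1 Hw2]. split.
    + intros H i Hi. apply Hw2. lia.
    + intros H. destruct (Z_le_gt_dec n w); auto. exfalso. apply Hw1. apply H. lia.
Qed.

Lemma Qp_ext (x y : Qp p) : (forall i, dig x i = dig y i) -> x = y.
Proof.
  destruct x as [dx lx ox]; destruct y as [dy ly oy]; simpl; intros H.
  assert (dx = dy) by (apply functional_extensionality; auto). subst.
  f_equal; apply proof_irrelevance.
Qed.

End S.


Section T.
Context {p : nat} (Hp : (2 <= p)%nat) (E : Qp p -> Prop).

Definition agree (x y : Qp p) (i : Z) := forall j, (j < i)%Z -> dig x j = dig y j.

Definition gfun (x : Qp p) (i : Z) : nat :=
  if excluded_middle_informative (adm_orders E i) then 0%nat else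
  match excluded_middle_informative (exists e, E e /\ agree e x i) with
  | left H => dig (proj1_sig (constructive_indefinite_description _ H)) i
  | right _ => 0%nat end.

Lemma gfun_lt x i : (gfun x i < p)%nat.
Proof.
  unfold gfun. destruct (excluded_middle_informative _); [lia|].
  destruct (excluded_middle_informative _); [apply dig_lt|lia].
Qed.

Lemma uniq_digit e e' i : E e -> E e' -> agree e e' i -> ~ adm_orders E i -> dig e i = dig e' i.
Proof.
  intros He He' Ha Hn. apply NNPP. intros Hd. apply Hn.
  exists e, e'. split; [auto|]. split; [auto|]. split.
  - intros Heq. subst. auto.
  - apply (is_val_sub Hp). split; auto.
Qed.

Lemma gfun_agree x y i : agree x y i -> gfun x i = gfun y i.
Proof.
  intros Hxy. unfold gfun. destruct (excluded_middle_informative _) as [|Hn]; auto.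
  destruct (excluded_middle_informative (exists e, E e /\ agree e x i)) as [H1|H1];
  destruct (excluded_middle_informative (exists e, E e /\ agree e y i)) as [H2|H2].
  - destruct (constructive_indefinite_description _ H1) as [e1 [He1 Ha1]].
    destruct (constructive_indefinite_description _ H2) as [e2 [He2 Ha2]]. simpl.
    apply uniq_digit; auto. intros j Hj. rewrite Ha1, Ha2, Hxy; auto.
  - exfalso. destruct H1 as [e [He Ha]]. apply H2. exists e. split; auto.
    intros j Hj. rewrite Ha, Hxy; auto.
  - exfalso. destruct H2 as [e [He Ha]]. apply H1. exists e. split; auto.
    intros j Hj. rewrite Ha, <- Hxy; auto.
  - auto.
Qed.

Lemma gfun_E e i : E e -> ~ adm_orders E i -> gfun e i = dig e i.
Proof.
  intros He Hn. unfold gfun. destruct (excluded_middle_informative _) as [|_]; [contradiction|].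
  destruct (excluded_middle_informative _) as [H1|H1].
  - destruct (constructive_indefinite_description _ H1) as [e1 [He1 Ha1]]. simpl.
    apply uniq_digit; auto.
  - exfalso. apply H1. exists e. split; auto. intros j Hj; auto.
Qed.

Lemma gfun_adm x i : adm_orders E i -> gfun x i = 0%nat.
Proof. intros H. unfold gfun. destruct (excluded_middle_informative _); auto; contradiction. Qed.

Definition fdig (x : Qp p) (i : Z) : nat := ((dig x i + p - gfun x i) mod p)%nat.

Lemma modsub a g : (a < p)%nat -> (g < p)%nat ->
  ((a + p - g) mod p = if Nat.leb g a then a - g else a + p - g)%nat.
Proof.
  intros Ha Hg. destruct (Nat.leb_spec g a).
  - replace (a + p - g)%nat with ((a - g) + 1 * p)%nat by lia.
    rewrite Nat.Div0.mod_add, Nat.mod_small by lia. auto.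
  - rewrite Nat.mod_small by lia. auto.
Qed.

Lemma fdig_lt x i : (fdig x i < p)%nat.
Proof. unfold fdig. apply Nat.mod_upper_bound. lia. Qed.

Lemma fdig_inj x y i : gfun x i = gfun y i -> (fdig x i = fdig y i <-> dig x i = dig y i).
Proof.
  intros Hg. unfold fdig. rewrite <- Hg.
  pose proof (dig_lt x i); pose proof (dig_lt y i); pose proof (gfun_lt x i).
  rewrite !modsub by auto.
  destruct (Nat.leb_spec (gfun x i) (dig x i)); destruct (Nat.leb_spec (gfun x i) (dig y i)); lia.
Qed.

Lemma fdig_E e i : E e -> ~ adm_orders E i -> fdig e i = 0%nat.
Proof.
  intros He Hn. unfold fdig. rewrite gfun_E by auto.
  pose proof (dig_lt e i). rewrite modsub by auto. rewrite Nat.leb_refl. lia.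
Qed.

Lemma fdig_adm x i : adm_orders E i -> fdig x i = dig x i.
Proof.
  intros H. unfold fdig. rewrite gfun_adm by auto. pose proof (dig_lt x i).
  rewrite modsub by lia. simpl. lia.
Qed.

Variable e0 : Qp p.
Hypothesis He0 : E e0.

Lemma fdig_low x : exists N, forall i, (i < N)%Z -> fdig x i = 0%nat.
Proof.
  destruct (dig_low x) as [Nx Hx]. destruct (dig_low e0) as [N0 H0].
  exists (Z.min Nx N0). intros i Hi.
  destruct (classic (adm_orders E i)) as [Ha|Hn].
  - rewrite fdig_adm by auto. apply Hx. lia.
  - unfold fdig. rewrite <- (gfun_agree e0 x i).
    + rewrite gfun_E by auto. rewrite Hx, H0 by lia. rewrite Nat.add_0_l, Nat.sub_0_r. apply Nat.Div0.mod_same.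
    + intros j Hj. rewrite Hx, H0 by lia. auto.
Qed.

Definition fmap (x : Qp p) : Qp p := mkQp (fdig x) (fdig_lt x) (fdig_low x).

Lemma fmap_agree x y i : agree x y i -> agree (fmap x) (fmap y) i.
Proof.
  intros H j Hj. simpl. apply fdig_inj.
  - apply gfun_agree. intros k Hk. apply H. lia.
  - apply H; auto.
Qed.

Lemma fmap_fd x y v : first_diff (fmap x) (fmap y) v <-> first_diff x y v.
Proof.
  split.
  - intros [H1 H2].
    destruct (diff_cases Hp x y) as [Hall|[w [Hw1 Hw2]]].
    + exfalso. apply H1. simpl. apply fdig_inj; auto. apply gfun_agree. intros j _; auto.
    + destruct (Z.lt_trichotomy w v) as [Hl|[Hl|Hl]].
      * exfalso. apply Hw1. apply (fdig_inj x y w). apply gfun_agree; auto. apply H2; auto.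
      * subst. split; auto.
      * exfalso. apply H1. simpl. apply fdig_inj.
        -- apply gfun_agree. intros j Hj; apply Hw2; lia.
        -- apply Hw2; auto.
  - intros [H1 H2]. split.
    + simpl. rewrite fdig_inj; auto. apply gfun_agree; auto.
    + apply fmap_agree; auto.
Qed.

Lemma fmap_iso : isometry fmap.
Proof.
  intros x y. apply absp_ext. intros v. rewrite !(is_val_sub Hp). apply fmap_fd.
Qed.

End T.


Lemma card_uniq {T} (A : T -> Prop) k k' : card_is A k -> card_is A k' -> k = k'.
Proof.
  intros [l [Hl [Hlk Hla]]] [l' [Hl' [Hlk' Hla']]]. subst.
  apply Nat.le_antisymm; apply NoDup_incl_length; auto; intros x Hx.
  - apply Hla', Hla, Hx.
  - apply Hla, Hla', Hx.
Qed.

Lemma card_ext {T} (A B : T -> Prop) k : (forall x, A x <-> B x) -> card_is A k -> card_is B k.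
Proof.
  intros H [l [Hl [Hlk Hla]]]. exists l. repeat split; auto.
  - intros Hx. apply H, Hla, Hx.
  - intros Hx. apply Hla, H, Hx.
Qed.

Lemma card_succ (A : Z -> Prop) n k : A n -> card_is (fun i => A i /\ (n + 1 <= i)%Z) k ->
  card_is (fun i => A i /\ (n <= i)%Z) (S k).
Proof.
  intros Hn [l [Hl [Hlk Hla]]]. exists (n :: l). split; [|split].
  - constructor; auto. intros Hin. apply Hla in Hin. lia.
  - simpl. lia.
  - intros x. simpl. split.
    + intros [<-|Hx]; [split; auto; lia|]. apply Hla in Hx. split; [apply Hx|lia].
    + intros [Hx1 Hx2]. destruct (Z.eq_dec n x); [left; auto|right]. apply Hla. split; auto. lia.
Qed.

Lemma card0_not {T} (A : T -> Prop) x : A x -> card_is A 0 -> False.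
Proof.
  intros Hx [l [_ [Hl Hla]]]. destruct l; [|simpl in Hl; lia]. apply Hla in Hx. inversion Hx.
Qed.

Lemma sum_shift (F : nat -> nat) h s m :
  list_sum (map (fun c => if Nat.eqb h c then S (F c) else F c) (seq s m)) =
  ((if andb (Nat.leb s h) (Nat.ltb h (s + m)) then 1 else 0) + list_sum (map F (seq s m)))%nat.
Proof.
  revert s. induction m as [|m IH]; intros s; simpl.
  - destruct (Nat.leb_spec s h); destruct (Nat.ltb_spec h (s+0)); simpl; lia.
  - rewrite IH. destruct (Nat.eqb_spec h s); destruct (Nat.leb_spec s h);
    destruct (Nat.ltb_spec h (s + S m)); destruct (Nat.leb_spec (S s) h);
    destruct (Nat.ltb_spec h (S s + m)); simpl; lia.
Qed.

Lemma sum_le (F : nat -> nat) P s m : (forall c, (s <= c < s + m)%nat -> (F c <= P)%nat) ->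
  (list_sum (map F (seq s m)) <= m * P)%nat.
Proof.
  revert s. induction m as [|m IH]; intros s H; simpl; [lia|].
  pose proof (H s ltac:(lia)). pose proof (IH (S s) ltac:(intros c Hc; apply H; lia)). lia.
Qed.

Lemma sum_le0 (F : nat -> nat) P d s m : (forall c, (s <= c < s + m)%nat -> (F c <= P)%nat) ->
  (s <= d < s + m)%nat -> F d = 0%nat ->
  (list_sum (map F (seq s m)) <= (m - 1) * P)%nat.
Proof.
  revert s. induction m as [|m IH]; intros s H Hd HF; simpl; [lia|].
  destruct (Nat.eq_dec d s).
  - subst s. rewrite HF. pose proof (sum_le F P (S d) m ltac:(intros c Hc; apply H; lia)). lia.
  - pose proof (H s ltac:(lia)). pose proof (IH (S s) ltac:(intros c Hc; apply H; lia) ltac:(lia) HF).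
    destruct m; [lia|]. simpl in *. nia.
Qed.

Section M.
Context {p : nat} (Hp : (2 <= p)%nat) (E : Qp p -> Prop) (hhom : p_homogeneous E).

Lemma count_digits (n : Z) (l : list (Qp p)) :
  length l = list_sum (map (fun c => length (filter (fun z => Nat.eqb (dig z n) c) l)) (seq 0 p)).
Proof.
  induction l as [|a l IH]; simpl.
  - clear. induction (seq 0 p); simpl; auto.
  - rewrite (map_ext _ (fun c => if Nat.eqb (dig a n) c then
       S (length (filter (fun z => Nat.eqb (dig z n) c) l)) else
       length (filter (fun z => Nat.eqb (dig z n) c) l))).
    + rewrite sum_shift. pose proof (dig_lt a n).
      destruct (Nat.leb_spec 0 (dig a n)); destruct (Nat.ltb_spec (dig a n) (0 + p)); simpl; lia.
    + intros c. destruct (Nat.eqb (dig a n) c); reflexivity.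
Qed.

Lemma split_step n e d : adm_orders E n -> E e -> (d < p)%nat ->
  exists e', E e' /\ agree e' e n /\ dig e' n = d.
Proof.
  intros Hn He Hd. apply NNPP. intros Hno.
  assert (Hbe : forall z m, E z -> E z /\ ball z m z).
  { intros z m Hz. split; auto. apply (ball_iff Hp). auto. }
  destruct (hhom n e) as [H0|[k [Hk [l [Hl [Hlk Hla]]]]]].
  { exact (card0_not (fun x => E x /\ ball e n x) e (Hbe e n He) H0). }
  destruct (hhom (n + 1)%Z e) as [H0|[k' [Hk' _]]].
  { exact (card0_not (fun x => E x /\ ball e (n+1)%Z x) e (Hbe e (n+1)%Z He) H0). }
  assert (Hkk : k = S k') by (eapply card_uniq; [exact Hk|apply card_succ; auto]). subst k.
  set (F := fun c => length (filter (fun z => Nat.eqb (dig z n) c) l)).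
  assert (HF : forall c, (F c <= p ^ k')%nat).
  { intros c. unfold F. destruct (filter (fun z => Nat.eqb (dig z n) c) l) as [|z r] eqn:Hf.
    - simpl. lia.
    - assert (Hz : In z (filter (fun z => Nat.eqb (dig z n) c) l)) by (rewrite Hf; left; auto).
      apply filter_In in Hz. destruct Hz as [Hz Hzc]. apply Hla in Hz. destruct Hz as [Hz Hze].
      apply Nat.eqb_eq in Hzc. rewrite (ball_iff Hp) in Hze.
      destruct (hhom (n + 1)%Z z) as [H0|[k'' [Hk'' Hc]]].
      { exfalso. exact (card0_not (fun x => E x /\ ball z (n+1)%Z x) z (Hbe z (n+1)%Z Hz) H0). }
      rewrite (card_uniq _ _ _ Hk'' Hk') in Hc.
      rewrite <- Hf.
      assert (Hc2 : card_is (fun x => E x /\ ball z (n + 1) x)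
                 (length (filter (fun z => Nat.eqb (dig z n) c) l))).
      { exists (filter (fun z => Nat.eqb (dig z n) c) l). split; [apply NoDup_filter; auto|split; auto].
        intros x. rewrite filter_In, Hla, (ball_iff Hp), (ball_iff Hp), Nat.eqb_eq. split.
        - intros [[Hx1 Hx2] Hx3]. split; auto. intros i Hi.
          destruct (Z.lt_ge_cases i n). { rewrite Hx2, Hze; auto. }
          assert (i = n) by lia. subst. congruence.
        - intros [Hx1 Hx2]. split; [split; auto|].
          + intros i Hi. rewrite Hx2 by lia. apply Hze; auto.
          + rewrite Hx2 by lia. auto. }
      rewrite (card_uniq _ _ _ Hc2 Hc). lia. }
  assert (HFd : F d = 0%nat).
  { unfold F. destruct (filter (fun z => Nat.eqb (dig z n) d) l) as [|z r] eqn:Hf; auto.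
    exfalso. assert (Hz : In z (filter (fun z => Nat.eqb (dig z n) d) l)) by (rewrite Hf; left; auto).
    apply filter_In in Hz. destruct Hz as [Hz Hzc]. apply Hla in Hz. destruct Hz as [Hz Hze].
    apply Nat.eqb_eq in Hzc. rewrite (ball_iff Hp) in Hze. apply Hno. exists z. split; auto. }
  pose proof (count_digits n l) as Hcnt. fold F in Hcnt.
  pose proof (sum_le0 F (p ^ k') d 0 p ltac:(intros; apply HF) ltac:(lia) HFd).
  rewrite Hlk in Hcnt. simpl in Hcnt. assert (0 < p ^ k')%nat by (apply Nat.neq_0_lt_0, Nat.pow_nonzero; lia).
  nia.
Qed.

End M.


Theorem lemma2p14 (p : nat) (hp : prime (Z.of_nat p)) (E : Qp p -> Prop)
  (hne : exists x, E x)
  (hbd : exists M : Z, forall i, adm_orders E i -> (i <= M)%Z)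
  (hhom : p_homogeneous E) :
  exists f : Qp p -> Qp p,
    isometry f /\ (forall y, hatE E y <-> exists x, E x /\ f x = y).
Proof.
  assert (Hp : (2 <= p)%nat) by (pose proof (prime_ge_2 _ hp); lia).
  destruct hne as [e0 He0]. destruct hbd as [M HM].
  exists (fmap Hp E e0 He0). split; [apply fmap_iso|]. intros y. split.
  - intros [Hy1 [My HMy]].
    destruct (dig_low y) as [N0 Hy0]; destruct (dig_low e0) as [Ne HNe].
    set (N := Z.min N0 Ne).
    assert (Hcl : forall m : nat, exists e, E e /\ agree e e0 N /\
               forall i, (N <= i < N + Z.of_nat m)%Z -> adm_orders E i -> dig e i = dig y i).
    { induction m as [|m IH].
      - exists e0. split; auto. split; [intros j _; auto|]. intros i Hi. lia.
      - destruct IH as [e [He [Ha Hi]]].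
        destruct (classic (adm_orders E (N + Z.of_nat m)%Z)) as [Hn|Hn].
        + destruct (split_step Hp E hhom (N + Z.of_nat m)%Z e (dig y (N + Z.of_nat m)%Z) Hn He (dig_lt _ _))
            as [e' [He' [Ha' Hd']]].
          exists e'. split; auto. split.
          * intros j Hj. rewrite Ha' by lia. apply Ha; auto.
          * intros i Hi' Hai. destruct (Z.eq_dec i (N + Z.of_nat m)%Z).
            -- subst; auto.
            -- rewrite Ha' by lia. apply Hi; auto. lia.
        + exists e. split; auto. split; auto. intros i Hi' Hai.
          destruct (Z.eq_dec i (N + Z.of_nat m)%Z); [subst; contradiction|]. apply Hi; auto. lia. }
    destruct (Hcl (Z.to_nat (M - N + 1))) as [e [He [Ha Hi]]].
    exists e. split; auto. apply Qp_ext. intros i. simpl.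
    destruct (classic (adm_orders E i)) as [Hai|Hni].
    + rewrite fdig_adm by auto. destruct (Z_lt_le_dec i N).
      * rewrite Ha by auto. rewrite HNe, Hy0 by lia. auto.
      * apply Hi; auto. pose proof (HM i Hai). lia.
    + rewrite (fdig_E Hp) by auto. apply NNPP. intros Hy. apply Hni. apply Hy1. auto.
  - intros [x [Hx <-]]. split.
    + intros i Hi. apply NNPP; intros Hn. apply Hi. simpl. apply (fdig_E Hp); auto.
    + exists M. intros i Hi. simpl. apply (fdig_E Hp); auto. intros Ha. apply HM in Ha. lia.
Qed.
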